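(* Let $A$ be a circular $m\times n$ matrix and let $\Gamma$ be a closed directed path (not necessarily simple) in $D(A)$. Then for every $j\in[n]$, $$p^+(\Gamma,j)-p^-(\Gamma,j)=p(\Gamma).$$
   Context: Notation: $[n]=\{1,\dots,n\}$ with addition mod $n$ (index $0$ identified with $n$); for $a,c\in[n]$ with $t\ge0$ minimal such that $a+t\equiv c\pmod n$, $[a,c)_n=\{a,\dots,a+t-1\}$ (mod $n$). An $m\times n$ $\{0,1\}$-matrix $A$ is circular if for each row $i$ there are $\ell_i\in[n]$ and an integer $2\le k_i\le n-1$ with row $i$ the incidence vector of $[\ell_i,\ell_i+k_i)_n$. $D(A)$: node set $[n]$ (labels mod $n$); forward row arcs $a_i=(\ell_i-1,\ell_i+k_i-1)$ ($i\in[m]$), forward short arcs $a_{m+j}=(j-1,j)$ ($j\in[n]$), reverse row arcs $\bar a_i=(\ell_i+k_i-1,\ell_i-1)$, reverse short arcs $\bar a_{m+j}=(j,j-1)$; lengths $l(a_i)=k_i$, $l(a_{m+j})=1$, $l(\bar a_i)=-k_i$, $l(\bar a_{m+j})=-1$. The winding number of a closed directed path $\Gamma$ is the integer $p(\Gamma)$ with $p(\Gamma)n=\sum_{a\in E(\Gamma)}l(a)$ (arcs counted with multiplicity). A forward row arc $a_i$ jumps over node $j$ iff $j\in[\ell_i,\ell_i+k_i)_n$; the forward short arc $(j-1,j)$ jumps over $j$ only; a reverse arc $\bar a_k$ jumps over $j$ iff $a_k$ does. $p^+(\Gamma,j)$ (resp. $p^-(\Gamma,j)$) is the number of forward (resp.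 reverse) arcs of $\Gamma$, counted with multiplicity, that jump over $j$. *)

(* Defs.v *)
From mathcomp Require Import all_boot all_order all_algebra.
Set Implicit Arguments. Unset Strict Implicit. Unset Printing Implicit Defensive.
Import GRing.Theory Num.Theory.

(* Node labels of D(A) are natural numbers read modulo n (label n = label 0). *)

Definition in_cint (n l len x : nat) : bool :=
  [exists t : 'I_len, (l + t) %% n == x %% n].

(* A is circular with data l_i (in [n]) and k_i (2 <= k_i <= n-1):
   row i is the incidence vector of [l_i, l_i + k_i)_n.
   Column c : 'I_n stands for column c+1 of [n]. *)
Definition circular_with (m n : nat) (A : 'M[bool]_(m, n))
  (l k : 'I_m -> nat) : Prop :=
  (forall i, 1 <= l i <= n) /\ (forall i, 2 <= k i <= n.-1) /\
  (forall i (c : 'I_n), A i c = in_cint n (l i) (k i) c.+1).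

(* Arcs of D(A): forward row arcs a_i, forward short arcs a_{m+j}
   (indexed by j' : 'I_n, standing for j = j'+1 in [n]), and their reverses. *)
Inductive darc (m n : nat) :=
| RowF of 'I_m | ShortF of 'I_n | RowR of 'I_m | ShortR of 'I_n.

Section Arcs.
Variables (m n : nat) (l k : 'I_m -> nat).

Definition atail (a : darc m n) : nat :=
  match a with
  | RowF i => (l i).-1
  | ShortF j => j
  | RowR i => (l i + k i).-1
  | ShortR j => j.+1
  end.

Definition ahead (a : darc m n) : nat :=
  match a with
  | RowF i => (l i + k i).-1
  | ShortF j => j.+1
  | RowR i => (l i).-1
  | ShortR j => j
  end.

Definition alen (a : darc m n) : int :=
  match a with
  | RowF i => (k i)%:Z
  | ShortF _ => 1
  | RowR i => - (k i)%:Z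
  | ShortR _ => -1
  end.

Definition aforward (a : darc m n) : bool :=
  match a with RowF _ | ShortF _ => true | _ => false end.

Definition ajumps (a : darc m n) (x : nat) : bool :=
  match a with
  | RowF i | RowR i => in_cint n (l i) (k i) x
  | ShortF j | ShortR j => j.+1 %% n == x %% n
  end.

Definition closed_path (s : seq (darc m n)) : bool :=
  (0 < size s) && cycle (fun a b => ahead a %% n == atail b %% n) s.

Definition pplus (s : seq (darc m n)) (x : nat) : nat :=
  count (fun a => aforward a && ajumps a x) s.
Definition pminus (s : seq (darc m n)) (x : nat) : nat :=
  count (fun a => ~~ aforward a && ajumps a x) s.

End Arcs.

(* Main.v *)
Require Import Defs.
From mathcomp Require Import all_boot all_order all_algebra zify.
Import GRing.Theory Num.Theory.
Section S.
Variables n J : nat.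
Hypothesis n_gt0 : (0 < n)%N.
Hypothesis HJ : (J < n)%N.
Definition rr x := ((x + (n - J)) %% n)%N.

Lemma cz_L3 y : (0 < y < n + n)%N -> (y %% n == 0)%N = (y == n).
Proof.
move=> hy; case: (ltnP y n) => h.
  rewrite modn_small //; apply/idP/idP => /eqP ?; apply/eqP; lia.
rewrite -(subnK h) modnDr modn_small; last lia.
apply/idP/idP => /eqP ?; apply/eqP; lia.
Qed.

Lemma cz_L1 x : (x %% n == J) = (rr x == 0)%N.
Proof.
rewrite /rr -modnDml cz_L3; last by have := ltn_pmod x n_gt0; lia.
apply/idP/idP => /eqP ?; apply/eqP; lia.
Qed.

Lemma cz_L2 a c : rr (a + c) = ((rr a + c) %% n)%N.
Proof. by rewrite /rr modnDml; congr (_ %% _)%N; lia. Qed.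

Lemma rrmod x : rr (x %% n) = rr x.
Proof. by rewrite /rr modnDml. Qed.

Lemma rr_lt x : (rr x < n)%N.
Proof. exact: ltn_pmod. Qed.

Lemma cz_core a len (E : bool) : (len <= n)%N -> E = (n <= rr a + len)%N ->
  (n * E + rr (a + len) = len + rr a)%N.
Proof.
move=> hl ->; rewrite cz_L2; have := rr_lt a.
case: (ltnP (rr a + len) n) => h h2.
  rewrite modn_small //; lia.
rewrite -(subnK h) modnDr modn_small; lia.
Qed.

Lemma cz_rowE a len : (len <= n)%N ->
  [exists u : 'I_len, (a.+1 + u) %% n == J] = (n <= rr a + len)%N.
Proof.
move=> hl; have := rr_lt a => ha.
apply/existsP/idP.
  move=> [u]; rewrite cz_L1 addSnnS cz_L2 cz_L3; last (have := ltn_ord u; lia).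
  move/eqP; have := ltn_ord u; lia.
move=> h; have hu : (n - (rr a).+1 < len)%N by lia.
exists (Ordinal hu); rewrite cz_L1 /= addSnnS cz_L2 cz_L3; last lia.
apply/eqP; lia.
Qed.

Lemma cz_shortE a : ((a.+1) %% n == J) = (n <= rr a + 1)%N.
Proof.
have := rr_lt a => ha.
rewrite cz_L1 -addn1 cz_L2 cz_L3; last lia.
apply/idP/idP; [move/eqP; lia | move=> ?; apply/eqP; lia].
Qed.
End S.

Local Open Scope ring_scope.
Section A.
Variables (m n : nat) (l k : 'I_m -> nat) (j : nat).
Hypothesis n_gt0 : (0 < n)%N.
Hypothesis hl : forall i, (1 <= l i)%N.
Hypothesis hk : forall i, (k i <= n)%N.
Let J := (j %% n)%N.
Let HJ : (J < n)%N. Proof. exact: ltn_pmod. Qed.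
Local Notation r := (rr n J).

Definition sj (a : darc m n) : int :=
  (aforward a && ajumps l k a j)%:Z - (~~ aforward a && ajumps l k a j)%:Z.

Lemma arcE a : n%:Z * sj a + (r (ahead l k a))%:Z = alen k a + (r (atail l k a))%:Z.
Proof.
case: a => [i|i|i|i] /=; rewrite /sj /=.
- have e1 : in_cint n (l i) (k i) j = (n <= r (l i).-1 + k i)%N.
    by rewrite /in_cint -(@cz_rowE n J n_gt0 HJ) // prednK.
  have := @cz_core n J n_gt0 HJ _ _ _ (hk i) e1.
  have -> : ((l i + k i).-1 = (l i).-1 + k i)%N by have := hl i; lia.
  move/(congr1 Posz); rewrite !PoszD PoszM => h. lia.
- have e1 : ((i.+1 %% n)%N == J) = (n <= r i + 1)%N by rewrite (@cz_shortE n J n_gt0 HJ).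
  have := @cz_core n J n_gt0 HJ _ _ _ n_gt0 e1.
  rewrite addn1.
  move/(congr1 Posz); rewrite !PoszD PoszM => h. lia.
- have e1 : in_cint n (l i) (k i) j = (n <= r (l i).-1 + k i)%N.
    by rewrite /in_cint -(@cz_rowE n J n_gt0 HJ) // prednK.
  have := @cz_core n J n_gt0 HJ _ _ _ (hk i) e1.
  have -> : ((l i + k i).-1 = (l i).-1 + k i)%N by have := hl i; lia.
  move/(congr1 Posz); rewrite !PoszD PoszM => h. lia.
- have e1 : ((i.+1 %% n)%N == J) = (n <= r i + 1)%N by rewrite (@cz_shortE n J n_gt0 HJ).
  have := @cz_core n J n_gt0 HJ _ _ _ n_gt0 e1.
  rewrite addn1.
  move/(congr1 Posz); rewrite !PoszD PoszM => h. lia.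
Qed.

Let e := fun a b : darc m n => (ahead l k a %% n == atail l k b %% n)%N.

Lemma pathE x0 s : path e x0 s ->
  (\sum_(a <- s) r (atail l k a) + r (ahead l k (last x0 s)) =
   r (ahead l k x0) + \sum_(a <- s) r (ahead l k a))%N.
Proof.
elim: s x0 => [|b s IH] x0 /=; first by rewrite !big_nil; lia.
move=> /andP [/eqP hb hp]; rewrite !big_cons -addnA IH //.
have : r (ahead l k x0) = r (atail l k b) by rewrite -(rrmod n J (ahead l k x0)) hb rrmod.
lia.
Qed.

Lemma cycleE s : cycle e s ->
  (\sum_(a <- s) r (atail l k a) = \sum_(a <- s) r (ahead l k a))%N.
Proof.
case: s => [|a s] hp; first by rewrite !big_nil.
rewrite /cycle in hp.
have := @pathE _ _ hp; rewrite last_rcons -cats1 !big_cat !big_seq1 !big_cons /=; lia.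
Qed.

Lemma sumE s : n%:Z * (\sum_(a <- s) sj a) + (\sum_(a <- s) r (ahead l k a))%N%:Z
  = \sum_(a <- s) alen k a + (\sum_(a <- s) r (atail l k a))%N%:Z.
Proof.
elim: s => [|a s IH]; first by rewrite !big_nil mulr0.
rewrite !big_cons mulrDr !PoszD addrACA arcE IH addrACA; done.
Qed.

Lemma countE s : (pplus l k s j)%:Z - (pminus l k s j)%:Z = \sum_(a <- s) sj a.
Proof.
elim: s => [|a s IH]; first by rewrite big_nil.
rewrite big_cons -IH /pplus /pminus /= !PoszD /sj; lia.
Qed.
End A.

Theorem lemma4p1 (m n : nat) (A : 'M[bool]_(m, n)) (l k : 'I_m -> nat)
  (HA : circular_with A l k)
  (s : seq (darc m n)) (Hs : closed_path l k s)
  (p : int) (Hp : p * n%:Z = \sum_(a <- s) alen k a)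
  (j : nat) (Hj : (1 <= j <= n)%N) :
  (pplus l k s j)%:Z - (pminus l k s j)%:Z = p.
Proof.
have n_gt0 : (0 < n)%N by lia.
case: HA => hl [hk _].
have hl' : forall i, (1 <= l i)%N by move=> i; case/andP: (hl i).
have hk' : forall i, (k i <= n)%N by move=> i; case/andP: (hk i) => _ h; lia.
rewrite countE.
have := @sumE m n l k j n_gt0 hl' hk' s.
case/andP: Hs => _ hc.
rewrite (@cycleE m n l k j n_gt0 s hc) -Hp => h.
have h2 : (\sum_(a <- s) sj m n l k j a) * n%:Z = p * n%:Z by rewrite mulrC; apply: (addIr _ h).
apply: (mulIf _ h2); first by apply/eqP; lia.
exact: n_gt0.
Qed.
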